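(* Let $\Gamma=F_r$ ($r\ge2$) be free on $\{a,b,a_3,\dots,a_r\}$, and for $n\ge2$ let $u_n=a^nba^{-n}b^{-1}$ and $D_n=V_{u_n}\subseteq Y$. Let $n_1,n_2\ge2$ and let $t\in\Gamma$ be nontrivial with $tD_{n_2}\cap D_{n_1}\ne\emptyset$. Then one of the following holds: (1) $t$ ends with $u_{n_2}^{-1}=ba^{n_2}b^{-1}a^{-n_2}$; (2) $t$ starts with $u_{n_1}=a^{n_1}ba^{-n_1}b^{-1}$; (3) $n_2\ne n_1$ and $t=u_{n_1}u_{n_2}^{-1}=a^{n_1}ba^{n_2-n_1}b^{-1}a^{-n_2}$.
   Context: $Y$ is the Gromov boundary of $\Gamma$: infinite reduced words in the generators and their inverses, with $\Gamma$ acting by concatenation and cancellation. For nontrivial $s\in\Gamma$: $y\in Y$ starts with $s$ if $y=sy'$ with $y'\in Y$ and the last letter of the reduced word of $s$ is not the inverse of the first letter of $y'$; $V_s$ is the set of $y\in Y$ starting with $s$; $t\in\Gamma$ starts (resp. ends) with $s$ if the reduced word of $t$ begins (resp. ends) with the reduced word of $s$. *)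

(* Defs.v *)
(* Free group F_r on generators indexed by nat k < r
   (a = generator 0, b = generator 1, a_3..a_r = generators 2..r-1). *)
From mathcomp Require Import all_boot.
Set Implicit Arguments. Unset Strict Implicit. Unset Printing Implicit Defensive.

(* A letter (k, false) is the generator a_k, (k, true) its inverse. *)
Definition letter := (nat * bool)%type.
Definition linv (x : letter) : letter := (x.1, ~~ x.2).

Definition reduced (w : seq letter) : bool := sorted (fun x y => y != linv x) w.
Definition word_on (r : nat) (w : seq letter) : bool := all (fun x => x.1 < r) w.
(* elements of Gamma = F_r are the reduced words over the r generators *)
Definition is_elem (r : nat) (t : seq letter) : bool := reduced t && word_on r t.

(* free reduction of a word; group product is reduce (s ++ t) *)
Definition reduce (w : seq letter) : seq letter :=
  foldr (fun x acc => if acc is y :: acc' then (if y == linv x then acc' else x :: acc)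
                      else [:: x]) [::] w.
Definition winv (w : seq letter) : seq letter := rev (map linv w).

(* Gromov boundary Y: infinite reduced words y : nat -> letter *)
Definition in_Y (r : nat) (y : nat -> letter) : Prop :=
  forall k, (y k).1 < r /\ y k.+1 != linv (y k).

Definition act1 (x : letter) (y : nat -> letter) : nat -> letter :=
  if y 0 == linv x then (fun k => y k.+1)
  else (fun k => if k is k'.+1 then y k' else x).
Definition act (w : seq letter) (y : nat -> letter) : nat -> letter := foldr act1 y w.

(* y starts with s: y = s y' with y' in Y and no cancellation between s and y' *)
Definition starts_with (r : nat) (s : seq letter) (y : nat -> letter) : Prop :=
  exists y', in_Y r y' /\ y =1 act s y' /\
    (if s is _ :: _ then y' 0 != linv (last (y' 0) s) else True).

Definition V (r : nat) (s : seq letter) (y : nat -> letter) : Prop :=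
  in_Y r y /\ starts_with r s y.

Definition ga : letter := (0, false).
Definition gb : letter := (1, false).

Definition u (n : nat) : seq letter :=
  reduce (nseq n ga ++ [:: gb] ++ nseq n (linv ga) ++ [:: linv gb]).

Definition D (r n : nat) (y : nat -> letter) : Prop := V r (u n) y.

(* Main.v *)
Require Import Defs.
From mathcomp Require Import all_boot.
From mathcomp Require Import zify.
Set Implicit Arguments. Unset Strict Implicit. Unset Printing Implicit Defensive.

Arguments reduced : simpl never.

Definition step (x : letter) (acc : seq letter) : seq letter :=
  if acc is y :: acc' then (if y == linv x then acc' else x :: acc) else [:: x].

Lemma reduceE w : reduce w = foldr step [::] w. Proof. by []. Qed.

Lemma linvK x : linv (linv x) = x. Proof. by case: x => a c; rewrite /linv /= negbK. Qed.
Lemma linv_inj : injective linv. Proof. exact: can_inj linvK. Qed.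
Lemma neq_linv x : x != linv x.
Proof. case: x => a c; rewrite /linv /=; apply/eqP => -[]; by case: c. Qed.

Lemma reduced_cons x w :
  reduced (x :: w) = (if w is y :: _ then y != linv x else true) && reduced w.
Proof. by case: w. Qed.

Lemma reduced_catl w1 w2 : reduced (w1 ++ w2) -> reduced w2.
Proof. elim: w1 => // x w1 IH; rewrite cat_cons reduced_cons => /andP[_]; exact: IH. Qed.

Lemma reduced_junction s1 x y s2 : reduced (rcons s1 x ++ y :: s2) -> y != linv x.
Proof. rewrite cat_rcons => /reduced_catl; rewrite reduced_cons; by case/andP. Qed.

Lemma reduced_nseq n x w : reduced w -> (if w is y :: _ then y != linv x else true) ->
  reduced (nseq n x ++ w).
Proof.
move=> hw hh; elim: n => //= n IH; rewrite reduced_cons IH andbT.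
case: n {IH} => [|n] /=; [exact: hh | exact: neq_linv].
Qed.

Lemma step_reduced x acc : reduced acc -> reduced (step x acc).
Proof.
case: acc => [|y acc] //= h; case: ifP => [_|/negbT hne].
  by move: h; rewrite reduced_cons => /andP[].
by rewrite reduced_cons hne h.
Qed.

Lemma step_cancel x acc : reduced acc -> step x (step (linv x) acc) = acc.
Proof.
case: acc => [|y acc] h; first by rewrite /step eqxx.
rewrite /step linvK; case: eqP => [eyx|_]; last by rewrite eqxx.
subst y; case: acc h => [|z acc] //= h.
by move: h; rewrite reduced_cons => /andP[hz _]; rewrite (negbTE hz).
Qed.

Lemma foldr_step_reduced w acc : reduced (w ++ acc) -> foldr step acc w = w ++ acc.
Proof.
elim: w => //= x w IH h.
move: h; rewrite reduced_cons => /andP[hh hw].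
rewrite IH // /step; case: (w ++ acc) hh => [|y l] //= hh; by rewrite (negbTE hh).
Qed.

Lemma winv_cons x w : winv (x :: w) = rcons (winv w) (linv x).
Proof. by rewrite /winv /= rev_cons. Qed.
Lemma winv_cat w1 w2 : winv (w1 ++ w2) = winv w2 ++ winv w1.
Proof. by rewrite /winv map_cat rev_cat. Qed.
Lemma winv_rcons w x : winv (rcons w x) = linv x :: winv w.
Proof. by rewrite /winv map_rcons rev_rcons. Qed.

Lemma foldr_cancel w acc : reduced acc -> foldr step acc (w ++ winv w) = acc.
Proof.
elim: w acc => //= x w IH acc h.
rewrite winv_cons -cats1 catA foldr_cat /= IH; first exact: step_cancel.
exact: step_reduced.
Qed.

Lemma reduce_cancel T1 W T2 : reduced (T1 ++ T2) ->
  reduce (T1 ++ W ++ winv W ++ T2) = T1 ++ T2.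
Proof.
move=> h; have h2 : reduced T2 by exact: reduced_catl h.
rewrite reduceE foldr_cat catA foldr_cat.
rewrite (@foldr_step_reduced T2 [::]) ?cats0 // foldr_cancel //.
exact: foldr_step_reduced.
Qed.

Definition icat (w : seq letter) (f : nat -> letter) : nat -> letter :=
  fun i => if i < size w then nth ga w i else f (i - size w).

Lemma act1_ext x f g : f =1 g -> act1 x f =1 act1 x g.
Proof.
move=> e i; rewrite /act1 e; case: ifP => _ /=; first exact: e.
by case: i => [|i] //=; exact: e.
Qed.

Lemma act_ext w f g : f =1 g -> act w f =1 act w g.
Proof. rewrite /act; elim: w => [|x w IH] e /=; first exact: e. apply: act1_ext; exact: IH. Qed.

Lemma act_icat w f : reduced (w ++ [:: f 0]) -> act w f =1 icat w f.
Proof.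
elim: w => [|x w IH] /= h.
  by move=> i; rewrite /icat /= subn0.
move: h; rewrite reduced_cons => /andP[hh hr].
have e := IH hr.
move=> i; rewrite /act /= -/(act w f).
rewrite (act1_ext x e i) /act1.
have -> : (icat w f 0 == linv x) = false.
  apply/negbTE; case: w {IH e hr} hh => [|y w] //=; rewrite /icat //= subn0.
by case: i.
Qed.

Lemma act_decomp t Y : reduced t -> exists t' k, t = t' ++ winv (mkseq Y k) /\
  act t Y =1 icat t' (fun i => Y (i + k)).
Proof.
elim: t => [|x t IH] h.
  by exists [::], 0; split => // i; rewrite /icat /= subn0 addn0.
move: h; rewrite reduced_cons => /andP[hh hr].
have [t' [k [et e]]] := IH hr.
have e2 : act (x :: t) Y =1 act1 x (icat t' (fun i => Y (i + k))).
  by move=> i; apply: act1_ext e i.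
case: t' et e e2 => [|y t''] et e e2.
- case: (eqVneq (Y k) (linv x)) => hY.
  + exists [::], k.+1; split.
      by rewrite /= mkseqS winv_rcons hY linvK et.
    move=> i; rewrite e2 /act1 /icat /= subn0 add0n hY eqxx /= !subn0.
    by rewrite addSnnS.
  + exists [:: x], k; split; first by rewrite et.
    move=> i; rewrite e2 /act1 /icat /= subn0 add0n (negbTE hY).
    by case: i => [|i] //=; rewrite !subn0.
- exists [:: x, y & t''], k; split; first by rewrite et.
  move=> i; rewrite e2 /act1.
  have -> : (icat (y :: t'') (fun i => Y (i + k)) 0 == linv x) = false.
    by apply/negbTE; move: hh; rewrite et.
  by case: i.
Qed.


Lemma u_red n l : 0 < n -> (if l is y :: _ then y != gb else true) -> reduced l ->
  reduced (nseq n ga ++ gb :: nseq n (linv ga) ++ linv gb :: l).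
Proof.
move=> hn hl hr; apply: reduced_nseq; last by [].
rewrite reduced_cons; apply/andP; split; first by case: n hn.
apply: reduced_nseq; last by [].
rewrite reduced_cons hr andbT linvK; exact: hl.
Qed.

Lemma u_eq n : 0 < n -> u n = nseq n ga ++ gb :: nseq n (linv ga) ++ [:: linv gb].
Proof.
move=> hn; rewrite /u reduceE foldr_step_reduced cats0 //=.
exact: u_red.
Qed.

Lemma size_u n : 0 < n -> size (u n) = (n + n).+2.
Proof. move=> hn; rewrite u_eq // size_cat /= size_cat !size_nseq /=; lia. Qed.

Definition cls n i := if i < n then 0 else if i == n then 1 else if i <= n + n then 2 else 3.

Lemma clsP n i : (i < n /\ cls n i = 0) \/ (i = n /\ cls n i = 1) \/
  (n < i <= n + n /\ cls n i = 2) \/ (n + n < i /\ cls n i = 3).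
Proof.
rewrite /cls; case: (ltnP i n) => h1; first by left.
case: (eqVneq i n) => h2; first by right; left.
case: (leqP i (n + n)) => h3; first by right; right; left; split => //; lia.
by right; right; right.
Qed.

Definition lt4 (c : nat) : letter :=
  if c == 0 then ga else if c == 1 then gb else if c == 2 then linv ga else linv gb.

Lemma nth_u n i : 0 < n -> i < (n + n).+2 -> nth ga (u n) i = lt4 (cls n i).
Proof.
move=> hn hi; rewrite u_eq // nth_cat size_nseq /cls.
case: ltnP => h1; first by rewrite nth_nseq h1.
case: eqP => h2; first by rewrite h2 subnn.
have [j ej] : exists j, i - n = j.+1 by exists (i - n).-1; lia.
rewrite ej /= nth_cat size_nseq.
case: (leqP i (n + n)) => h3.
  have hj : j < n by lia.
  by rewrite hj nth_nseq hj.
have hj : (j < n) = false by lia.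
have hj2 : j - n = 0 by lia.
by rewrite hj hj2.
Qed.

Lemma lt4_inj c d : c < 4 -> d < 4 -> lt4 c = lt4 d -> c = d.
Proof. by case: c => [|[|[|[|]]]] //; case: d => [|[|[|[|]]]]. Qed.

Lemma cls_lt n i : cls n i < 4.
Proof. rewrite /cls; case: ifP => // _; case: ifP => // _; by case: ifP. Qed.

Lemma nth_cls n m i j : 0 < n -> 0 < m -> i < (n + n).+2 -> j < (m + m).+2 ->
  (nth ga (u n) i = nth ga (u m) j) <-> (cls n i = cls m j).
Proof.
move=> hn hm hi hj; rewrite !nth_u //; split; last by move=> ->.
by apply: lt4_inj; apply: cls_lt.
Qed.


Lemma core n1 n2 p k : 0 < n1 -> 0 < n2 -> p < (n1 + n1).+2 -> k < (n2 + n2).+2 ->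
  (forall e, p + e < (n1 + n1).+2 -> k + e < (n2 + n2).+2 -> cls n1 (p + e) = cls n2 (k + e)) ->
  (0 < p -> 0 < k -> cls n1 p.-1 <> cls n2 k.-1) -> 0 < p + k ->
  (n1 + n1).+2 - p = (n2 + n2).+2 - k /\ n1 <> n2.
Proof.
move=> h1 h2 hp hk O J N.
have O0 := O 0; rewrite !addn0 in O0; have {}O0 := O0 hp hk.
case: (ltngtP p n1) => [p_lt|p_gt|p_eq].
- have k_lt : k < n2.
    by move: (clsP n1 p) (clsP n2 k) O0 p_lt; clear; lia.
  have ec : n1 - p = n2 - k.
    case: (ltngtP (n1 - p) (n2 - k)) => // h.
      by move: (O (n1 - p)) (clsP n1 (p + (n1 - p))) (clsP n2 (k + (n1 - p))) h p_lt k_lt hp hk; clear; lia.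
    by move: (O (n2 - k)) (clsP n1 (p + (n2 - k))) (clsP n2 (k + (n2 - k))) h p_lt k_lt hp hk; clear; lia.
  have en : n1 = n2.
    case: (ltngtP n1 n2) => // h.
      by move: (O ((n1 + n1).+1 - p)) (clsP n1 (p + ((n1 + n1).+1 - p))) (clsP n2 (k + ((n1 + n1).+1 - p)))
        h ec p_lt k_lt hp hk; clear; lia.
    by move: (O ((n2 + n2).+1 - k)) (clsP n1 (p + ((n2 + n2).+1 - k))) (clsP n2 (k + ((n2 + n2).+1 - k)))
        h ec p_lt k_lt hp hk; clear; lia.
  subst n2; have epk : p = k by lia.
  subst k; have hp0 : 0 < p by lia.
  by exfalso; apply: J.
- have hk0 : n2 < k.
    by move: (clsP n1 p) (clsP n2 k) O0 p_gt; clear; lia.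
  case: (eqVneq p (n1 + n1).+1) => hpB.
    have hkB : k = (n2 + n2).+1.
      by move: (clsP n1 p) (clsP n2 k) O0 hpB hk; clear; lia.
    exfalso; apply: J; try lia.
    by move: (clsP n1 p.-1) (clsP n2 k.-1) hpB hkB h1 h2; clear; lia.
  have eL : (n1 + n1).+2 - p = (n2 + n2).+2 - k.
    have hk1 : k <= n2 + n2 by move: (clsP n1 p) (clsP n2 k) O0 hpB hp p_gt; clear; lia.
    case: (ltngtP ((n1 + n1).+1 - p) ((n2 + n2).+1 - k)) => h; try lia.
      by move: (O ((n1 + n1).+1 - p)) (clsP n1 (p + ((n1 + n1).+1 - p))) (clsP n2 (k + ((n1 + n1).+1 - p)))
        h hpB hp hk p_gt hk0 hk1; clear; lia.
    by move: (O ((n2 + n2).+1 - k)) (clsP n1 (p + ((n2 + n2).+1 - k))) (clsP n2 (k + ((n2 + n2).+1 - k)))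
        h hpB hp hk p_gt hk0 hk1; clear; lia.
  split => // en; subst n2.
  have epk : p = k by lia.
  subst k; apply: J => //; lia.
- exfalso; subst p.
  have hkB : k = n2.
    by move: (clsP n1 n1) (clsP n2 k) O0; clear; lia.
  subst k; apply: J => //.
  by move: (clsP n1 n1.-1) (clsP n2 n2.-1) h1 h2; clear; lia.
Qed.


Lemma starts_u r n y : 0 < n -> starts_with r (u n) y ->
  exists y', y =1 icat (u n) y' /\ y' 0 != gb.
Proof.
move=> hn [y' [_ [e h]]].
have hne : y' 0 != gb.
  move: h; rewrite u_eq //; case: n hn {e} => // n _ /=.
  by rewrite last_cat /= last_cat /= linvK.
exists y'; split => // i; rewrite e; apply: act_icat.
rewrite u_eq // -!catA /= -catA /=.
by apply: u_red => //; case: (y' 0) hne.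
Qed.

Theorem lemma5p7 (r : nat) (hr : 2 <= r) (n1 n2 : nat) (h1 : 2 <= n1) (h2 : 2 <= n2)
  (t : seq letter) (ht : is_elem r t) (tnt : t != [::])
  (hint : exists y, D r n2 y /\ D r n1 (act t y)) :
  suffix (winv (u n2)) t \/ prefix (u n1) t \/
  (n2 != n1 /\ t = reduce (u n1 ++ winv (u n2))).
Proof.
have hn1 : 0 < n1 by lia. have hn2 : 0 < n2 by lia.
case: hint => y [[_ hs2] [_ hs1]].
have [y2 [ey hy2]] := starts_u hn2 hs2.
have [y1 [ey1 hy1]] := starts_u hn1 hs1.
have hrt : reduced t by case/andP: ht.
pose Y := icat (u n2) y2.
have [t' [k [et ea]]] := act_decomp Y hrt.
have E : forall i, icat t' (fun i => Y (i + k)) i = icat (u n1) y1 i.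
  move=> i; rewrite -ea -ey1; symmetry; exact: act_ext ey i.
have hYi : forall i, i < size (u n2) -> Y i = nth ga (u n2) i.
  by move=> i hi; rewrite /Y /icat hi.
case: (leqP (size (u n2)) k) => hk.
  left; apply/suffixP.
  have hm : mkseq Y k = u n2 ++ drop (size (u n2)) (mkseq Y k).
    rewrite -{1}(cat_take_drop (size (u n2)) (mkseq Y k)); congr (_ ++ _).
    apply: (@eq_from_nth _ ga).
      by rewrite size_take size_mkseq; case: ltnP => // h; lia.
    move=> i hi.
    have hi' : i < size (u n2).
      move: hi; rewrite size_take size_mkseq; by case: (ltnP (size (u n2)) k) => hh; lia.
    rewrite nth_take // (@nth_mkseq _ ga Y k i) ?hYi //; lia.
  exists (t' ++ winv (drop (size (u n2)) (mkseq Y k))).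
  by rewrite et {1}hm winv_cat catA.
have hmk : mkseq Y k = take k (u n2).
  apply: (@eq_from_nth _ ga); first by rewrite size_take size_mkseq hk.
  move=> i; rewrite size_mkseq => hi; rewrite (@nth_mkseq _ ga Y k i) // nth_take // hYi //; lia.
move ep : (size t') => p.
case: (leqP (size (u n1)) p) => hp.
  right; left; apply/prefixP.
  have ht' : t' = u n1 ++ drop (size (u n1)) t'.
    rewrite -{1}(cat_take_drop (size (u n1)) t'); congr (_ ++ _).
    apply: (@eq_from_nth _ ga).
      by rewrite size_take ep; case: (ltnP (size (u n1)) p) => hh; lia.
    move=> i hi.
    have hi' : i < size (u n1) by move: hi; rewrite size_take ep; case: (ltnP (size (u n1)) p) => hh; lia.
    have hi'' : i < size t' by lia.
    rewrite nth_take //; have := E i; rewrite /icat hi' hi'' => ->; done.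
  exists (drop (size (u n1)) t' ++ winv (mkseq Y k)).
  by rewrite et {1}ht' catA.
have ht'' : t' = take p (u n1).
  apply: (@eq_from_nth _ ga); first by rewrite size_take hp ep.
  move=> i hi; rewrite ep in hi.
  have hi' : i < size (u n1) by lia.
  rewrite nth_take //; have := E i; rewrite /icat hi' ep hi => ->; done.
have Hov : forall e, p + e < size (u n1) -> k + e < size (u n2) ->
    nth ga (u n1) (p + e) = nth ga (u n2) (k + e).
  move=> e he1 he2; have := E (p + e); rewrite /icat ep he1.
  have -> : (p + e < p) = false by lia.
  have -> : p + e - p + k = k + e by lia.
  by rewrite hYi // => <-.
have N : 0 < p + k.
  case: (posnP (p + k)) => // h0; exfalso.
  have p0 : p = 0 by lia. have k0 : k = 0 by lia.
  by move: tnt; rewrite et hmk ht'' p0 k0 !take0.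
rewrite size_u // in hp; rewrite size_u // in hk.
have [eL nn] : (n1 + n1).+2 - p = (n2 + n2).+2 - k /\ n1 <> n2.
  apply: core => //.
  - move=> e he1 he2; apply/nth_cls => //; apply: Hov; rewrite size_u //.
  - move=> hp0 hk0 hc.
    have hr2 := hrt; rewrite et hmk ht'' in hr2.
    rewrite -(prednK hp0) -(prednK hk0) (take_nth ga) ?size_u ?(take_nth ga (s := u n2)) ?size_u in hr2; try lia.
    move: hr2; rewrite winv_rcons => /reduced_junction; rewrite (inj_eq linv_inj).
    by move/eqP; apply; apply/nth_cls => //; lia.
right; right; split; first by apply/eqP => /esym.
have hd : drop p (u n1) = drop k (u n2).
  apply: (@eq_from_nth _ ga); first by rewrite !size_drop !size_u.
  move=> i; rewrite size_drop size_u // => hi; rewrite !nth_drop Hov // size_u //; lia.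
have -> : u n1 ++ winv (u n2) =
    take p (u n1) ++ drop k (u n2) ++ winv (drop k (u n2)) ++ winv (take k (u n2)).
  by rewrite -{1}hd catA cat_take_drop -winv_cat cat_take_drop.
rewrite reduce_cancel; first by rewrite et hmk ht''.
by rewrite -hmk -ht'' -et.
Qed.
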